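(* In a soft sequence heap with rank threshold $r_0=\lceil\lg(1/\epsilon)\rceil$, for every item $e$ contained in a sequence of rank $r$, we have $|C(e)|\le c_r$ and $|W(e)|\le w_r$, where $c_r=w_r=0$ for $r\le r_0$ and $c_r=w_r=2^{\lfloor (r-r_0)/2\rfloor}-1$ for $r>r_0$.
   Context: Soft sequence heap with error parameter $0<\epsilon<1$ and $r_0=\lceil \lg(1/\epsilon)\rceil$ ($\lg$ = binary logarithm). The heap stores a list of nonempty sequences of items, each sorted increasingly by key and having a nonnegative integer rank. Each item $e$ currently in a sequence carries a (possibly empty) corruption-set $C(e)$ and witness-set $W(e)$; a newly inserted item has both empty. The operation $\mathrm{reduce}(L)$ on a sorted sequence $L=e_1,\dots,e_m$: for every $1\le i<m/2$, the item $e_{2i}$ is removed from $L$, the items $\{e_{2i}\}\cup C(e_{2i})$ are added to $C(e_{2i+1})$, and the items $\{e_{2i}\}\cup W(e_{2i})$ are added to $W(e_{2i-1})$. A rank-$0$ sequence is created by inserting a single item. Merging two sequences of equal rank $r$ produces their sorted union, of rank $r+1$, with corruption- and witness-sets unchanged; if $r+1>r_0$ and $r+1-r_0$ is even, $\mathrm{reduce}$ is then applied to the result. Apart from $\mathrm{reduce}$, corruption- and witness-sets are only shrunk (by extract-min removing items from them or discarding them). *)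

(* Defs.v *)
From HB Require Import structures.
From mathcomp Require Import all_boot all_order all_algebra.
From mathcomp Require Import finmap.
From mathcomp Require Import all_classical all_reals all_analysis.
Set Implicit Arguments. Unset Strict Implicit. Unset Printing Implicit Defensive.
Import Order.TTheory GRing.Theory Num.Theory.

Local Open Scope fset_scope.

(* r0 = ceil(lg(1/eps)), lg = binary logarithm; nonnegative for 0 < eps < 1. *)
Definition r0_of (R : realType) (eps : R) : nat :=
  `|Num.ceil (ln (eps^-1) / ln 2)|%N.

Definition cbound (r0 r : nat) : nat :=
  if (r <= r0)%N then 0%N else (2 ^ (r - r0)./2 - 1)%N.

Section SoftSeqHeap.
Variables (T : choiceType) (d : Order.disp_t) (K : orderType d) (key : T -> K).

(* an item currently in a sequence together with its corruption-set C(e)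
   and witness-set W(e) *)
Definition entry := (T * {fset T} * {fset T})%type.
Definition ent_item (x : entry) : T := x.1.1.
Definition ent_C (x : entry) : {fset T} := x.1.2.
Definition ent_W (x : entry) : {fset T} := x.2.

(* a sequence: (rank, sorted list of entries) *)
Definition sseq := (nat * seq entry)%type.

Definition key_sorted (L : seq entry) : Prop :=
  sorted (fun a b => (key (ent_item a) <= key (ent_item b))%O) L.

(* e_{2i} = y is removed; {y} ∪ C(y) is added to C(z), z = e_{2i+1};
   {y} ∪ W(y) is added to W(x), x = e_{2i-1} *)
Definition addW (x y : entry) : entry :=
  (ent_item x, ent_C x, ent_W x `|` (ent_item y |` ent_W y)).
Definition addC (z y : entry) : entry :=
  (ent_item z, ent_C z `|` (ent_item y |` ent_C y), ent_W z).

(* red x l processes x :: l, x being at an odd position *)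
Fixpoint red (x : entry) (l : seq entry) : seq entry :=
  match l with
  | [::] => [:: x]
  | [:: y] => [:: x; y]
  | y :: z :: rest => addW x y :: red (addC z y) rest
  end.

Definition reduce (L : seq entry) : seq entry :=
  if L is x :: l then red x l else [::].

Definition merge_finish (r0 r' : nat) (L : seq entry) : seq entry :=
  if (r0 < r')%N && ~~ odd (r' - r0) then reduce L else L.

Inductive shrinks : seq entry -> seq entry -> Prop :=
| Sh_nil : shrinks [::] [::]
| Sh_drop x L L' : shrinks L L' -> shrinks (x :: L) L'
| Sh_keep e C W C' W' L L' :
    shrinks L L' -> C' `<=` C -> W' `<=` W ->
    shrinks ((e, C, W) :: L) ((e, C', W') :: L').

Inductive reachable (r0 : nat) : seq sseq -> Prop :=
| Re_nil : reachable r0 [::]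
| Re_perm H H' : reachable r0 H -> perm_eq H H' -> reachable r0 H'
| Re_meld H1 H2 : reachable r0 H1 -> reachable r0 H2 -> reachable r0 (H1 ++ H2)
| Re_insert H e :
    reachable r0 H -> reachable r0 ((0%N, [:: (e, fset0, fset0)]) :: H)
| Re_merge H r L1 L2 L :
    reachable r0 ((r, L1) :: (r, L2) :: H) ->
    key_sorted L -> perm_eq L (L1 ++ L2) ->
    reachable r0 ((r.+1, merge_finish r0 r.+1 L) :: H)
| Re_shrink H r L L' :
    reachable r0 ((r, L) :: H) -> shrinks L L' -> L' != [::] ->
    reachable r0 ((r, L') :: H)
| Re_shrink_del H r L :
    reachable r0 ((r, L) :: H) -> shrinks L [::] -> reachable r0 H.

End SoftSeqHeap.

(* Main.v *)
Require Import Defs.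
From HB Require Import structures.
From mathcomp Require Import all_boot all_order all_algebra.
From mathcomp Require Import finmap.
From mathcomp Require Import all_classical all_reals all_analysis.
From mathcomp Require Import zify.
Import Order.TTheory GRing.Theory Num.Theory.
Local Open Scope fset_scope.

Lemma card_add3 (T : choiceType) (A B : {fset T}) (a : T) :
  (#|` A `|` (a |` B)| <= #|` A| + (#|` B|).+1)%N.
Proof.
apply: leq_trans (leq_card_fsetU _ _).1 _.
rewrite leq_add2l cardfsU1; case: (a \notin B) => //=.
Qed.

Lemma cbound_mono r0 r : (cbound r0 r <= cbound r0 r.+1)%N.
Proof.
rewrite /cbound; case: (leqP r r0) => H1; first by [].
have -> : (r.+1 <= r0)%N = false by apply/negbTE; rewrite -ltnNge ltnS ltnW.
apply: leq_sub2r; apply: leq_pexp2l => //.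
apply: half_leq; lia.
Qed.

Lemma cbound_red r0 r : (r0 < r.+1)%N -> ~~ odd (r.+1 - r0) ->
  ((cbound r0 r).*2.+1 <= cbound r0 r.+1)%N.
Proof.
move=> H1 H2.
have Hr : (r0 < r)%N.
  rewrite ltn_neqAle -ltnS H1 andbT; apply/eqP=> E; subst r0.
  by rewrite subSn // subnn in H2.
have E : (r.+1 - r0 = (r - r0).+1)%N by rewrite subSn // ltnW.
rewrite /cbound (negbTE (_ : ~~ (r.+1 <= r0)%N)) -?ltnNge //.
rewrite (negbTE (_ : ~~ (r <= r0)%N)) -?ltnNge //.
rewrite E /= in H2 *.
move: H2; set k := (r - r0) => H2.
have -> : uphalf k = (k./2).+1.
  have H3 := negPn H2.
  by rewrite uphalf_half H3.
rewrite expnS.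
have := expn_gt0 2 (k./2); lia.
Qed.

Section S.
Variables (T : choiceType) (d : Order.disp_t) (K : orderType d) (key : T -> K).

Definition okb (b : nat) (x : entry T) :=
  (#|` ent_C x| <= b)%N && (#|` ent_W x| <= b)%N.

Lemma red_ok b b' x l : ((b.*2).+1 <= b')%N ->
  (#|` ent_C x| <= b')%N -> (#|` ent_W x| <= b)%N -> all (okb b) l ->
  all (okb b') (red x l).
Proof.
move=> Hb; move: (leqnn (size l)); elim: (size l) {-2}l x => [|n IHn] [|y [|z rest]] x //= Hs HC HW.
- move=> _; rewrite /okb HC /=; lia.
- move=> _; rewrite /okb HC /=; lia.
- move=> /andP[/andP[y1 y2] _]; rewrite /okb HC /=.
  apply/and3P; split; try lia.
- move=> /and3P[/andP[y1 y2] /andP[z1 z2] Hr].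
  apply/andP; split.
    rewrite /okb /addW /ent_C /ent_W /=; apply/andP; split; first exact HC.
    have := card_add3 _ (ent_W x) (ent_W y) (ent_item y).
    rewrite /ent_W in HW y2 *; lia.
  apply: IHn => //; first by lia.
  rewrite /addC /ent_C /=.
  have := card_add3 _ (ent_C z) (ent_C y) (ent_item y).
  rewrite /ent_C in z1 y1 *; lia.
Qed.

Lemma shrinks_ok L L' b : shrinks L L' -> all (okb b) L -> all (okb b) L'.
Proof.
elim=> //= [x {}L {}L' _ IH /andP[_ /IH] //|e C W C' W' {}L {}L' _ IH sC sW].
move=> /andP[/andP[h1 h2] /IH ->]; rewrite andbT /okb /ent_C /ent_W /=.
rewrite /ent_C /ent_W /= in h1 h2.
by rewrite (leq_trans (fsubset_leq_card sC)) // (leq_trans (fsubset_leq_card sW)).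
Qed.

Definition inv r0 (H : seq (sseq T)) :=
  all (fun p : sseq T => all (okb (cbound r0 p.1)) p.2) H.

Lemma mono_ok b b' l : (b <= b')%N -> all (okb b) l -> all (okb b') l.
Proof.
move=> hb; apply: sub_all => x /andP[h1 h2]; apply/andP; split; exact: leq_trans hb.
Qed.

Lemma reach_inv r0 H : reachable key r0 H -> inv r0 H.
Proof.
rewrite /inv; elim=> //=.
- by move=> H1 H2 _ IH hp; rewrite -(perm_all _ hp).
- by move=> H1 H2 _ IH1 _ IH2; rewrite all_cat IH1 IH2.
- move=> {}H r L1 L2 L _ /and3P[h1 h2 ->] _ hp; rewrite andbT.
  have hL : all (okb (cbound r0 r)) L by rewrite (perm_all _ hp) all_cat h1 h2.
  rewrite /merge_finish; case: ifP => [/andP[c1 c2]|_].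
    case: L hL {hp} => [//|x l] /= /andP[/andP[x1 x2] hl].
    have Hx : (#|` ent_C x| <= cbound r0 r.+1)%N by apply: leq_trans x1 (cbound_mono _ _).
    exact: (red_ok _ _ _ _ (cbound_red _ _ c1 c2) Hx x2 hl).
  exact: mono_ok _ _ _ (cbound_mono _ _) hL.
- move=> {}H r L L' _ /andP[hL ->] hs _; rewrite andbT; exact: shrinks_ok _ _ _ hs hL.
- by move=> {}H r L _ /andP[_ ->].
Qed.
End S.

Theorem lemma6 (R : realType) (eps : R) (Heps0 : (0 < eps)%R) (Heps1 : (eps < 1)%R)
  (T : choiceType) (d : Order.disp_t) (K : orderType d) (key : T -> K)
  (H : seq (sseq T)) :
  reachable key (r0_of eps) H ->
  forall (r : nat) (L : seq (entry T)), (r, L) \in H ->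
  forall (e : T) (C W : {fset T}), (e, C, W) \in L ->
  (#|` C| <= cbound (r0_of eps) r)%N /\ (#|` W| <= cbound (r0_of eps) r)%N.
Proof.
move=> /reach_inv /allP hH r L /hH /allP hL e C W /hL /andP[h1 h2].
by split.
Qed.
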